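(* The column Capelli bitableaux $[i_1,\dots,i_h|j_1,\dots,j_h]$ ($h\ge0$, $i_r,j_r\in\{1,\dots,n\}$, the empty one being $1$) span $\mathbf{U}(gl(n))$ as a vector space; likewise the column Capelli *-bitableaux $[i_1,\dots,i_h|j_1,\dots,j_h]^*$ span $\mathbf{U}(gl(n))$.
   Context: Virtual variables: let $A_0=\{\alpha_1,\dots,\alpha_{m_0}\}$ (positive virtual symbols, parity $0$), $A_1=\{\beta_1,\dots,\beta_{m_1}\}$ (negative virtual symbols, parity $1$), $L=\{1,\dots,n\}$ (proper symbols, parity $1$), $m_0,m_1$ sufficiently large. $gl(m_0|m_1+n)$ is the Lie superalgebra with homogeneous basis $e_{a,b}$ of parity $|a|+|b|\bmod 2$ and superbracket $[e_{a,b},e_{c,d}]=\delta_{bc}e_{a,d}-(-1)^{(|a|+|b|)(|c|+|d|)}\delta_{ad}e_{c,b}$; $\mathbf{U}(gl(n))\subset \mathbf{U}(gl(m_0|m_1+n))$ via $e_{i,j}$, $i,j\in L$. A product $e_{a_m,b_m}\cdots e_{a_1,b_1}$ is irregular if there are $i\le m$ and a virtual $\gamma$ with $\#\{j\le i:b_j=\gamma\}>\#\{j<i:a_j=\gamma\}$; $\mathbf{Irr}$ is the left ideal they generate; it is known that $Virt=\mathbf{U}(gl(n))\oplus\mathbf{Irr}$ is a subalgebra with $\mathbf{Irr}$ a two-sided ideal, and $\mathfrak p:Virt\to\mathbf{U}(gl(n))$ is the projection with kernel $\mathbf{Irr}$. The column Capelli bitableau is $[i_1,\dots,i_h|j_1,\dots,j_h]=\mathfrak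 p(e_{i_1\alpha_1}\cdots e_{i_h\alpha_h}e_{\alpha_1j_1}\cdots e_{\alpha_hj_h})$ with $\alpha_1,\dots,\alpha_h$ distinct positive virtual symbols, and the column Capelli *-bitableau is $[i_1,\dots,i_h|j_1,\dots,j_h]^*=\mathfrak p(e_{i_1\beta_1}\cdots e_{i_h\beta_h}e_{\beta_1j_1}\cdots e_{\beta_hj_h})$ with $\beta_1,\dots,\beta_h$ distinct negative virtual symbols. *)

(* Defs.v *)
(* Free-algebra model of U(gl(m0|m1+n)) via representatives. *)
From HB Require Import structures.
From mathcomp Require Import all_boot all_algebra.
Set Implicit Arguments. Unset Strict Implicit. Unset Printing Implicit Defensive.
Import GRing.Theory.
Local Open Scope ring_scope.

(* Symbols: inl (inl k) = alpha_k (positive virtual, parity 0),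
            inl (inr k) = beta_k  (negative virtual, parity 1),
            inr i       = proper symbol i (parity 1).  Indices are 1-based. *)
Definition sym := ((nat + nat) + nat)%type.
Definition alpha (k : nat) : sym := inl (inl k).
Definition beta (k : nat) : sym := inl (inr k).
Definition prp (i : nat) : sym := inr i.
Definition par (s : sym) : bool := match s with inl (inl _) => false | _ => true end.
Definition virtual (s : sym) : bool := if s is inl _ then true else false.
Definition valid_sym (m0 m1 n : nat) (s : sym) : bool :=
  match s with
  | inl (inl k) => (1 <= k <= m0)%N
  | inl (inr k) => (1 <= k <= m1)%N
  | inr i => (1 <= i <= n)%N
  end.
Definition proper_sym (n : nat) (s : sym) : bool :=
  if s is inr i then (1 <= i <= n)%N else false.

(* letter (a,b) stands for the generator e_{a,b}; a word is a monomial,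
   read left to right: [:: l_m; ...; l_1] = e_{l_m} ... e_{l_1}. *)
Definition letter := (sym * sym)%type.
Definition word := seq letter.
Definition lpar (l : letter) : bool := par l.1 (+) par l.2.
Definition valid_letter m0 m1 n (l : letter) : bool :=
  valid_sym m0 m1 n l.1 && valid_sym m0 m1 n l.2.
Definition valid_word m0 m1 n (w : word) : bool := all (valid_letter m0 m1 n) w.

(* Irregular monomial e_{a_m b_m} ... e_{a_1 b_1}:
   exists i <= m and virtual gamma with
   #{j <= i : b_j = gamma} > #{j < i : a_j = gamma}. *)
Definition irregular (w : word) : Prop :=
  let r := rev w in
  exists (i : nat) (g : sym), (i < size r)%N /\ virtual g /\
    (count (fun l : letter => l.1 == g) (take i r) <
     count (fun l : letter => l.2 == g) (take i.+1 r))%N.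

Section FreeAlg.
Variable K : fieldType.

(* formal linear combinations of monomials (elements of the free algebra) *)
Definition fls := seq (K * word).
Definition coef (f : fls) (w : word) : K :=
  \sum_(p <- f) (if p.2 == w then p.1 else 0).
Definition scalef (c : K) (f : fls) : fls := [seq (c * p.1, p.2) | p <- f].
Definition mulf (f g : fls) : fls := [seq (p.1 * q.1, p.2 ++ q.2) | p <- f, q <- g].
Definition wrd (w : word) : fls := [:: (1, w)].
Definition subf (f g : fls) : fls := f ++ scalef (-1) g.
Definition sgn (b : bool) : K := if b then -1 else 1.
Definition dlt (a b : sym) : K := if a == b then 1 else 0.

(* e_ab e_cd - (-1)^{(|a|+|b|)(|c|+|d|)} e_cd e_ab - [e_ab, e_cd], with
   [e_ab,e_cd] = d_bc e_ad - (-1)^{...} d_ad e_cb *)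
Definition superrel (x y : letter) : fls :=
  [:: (1, [:: x; y]);
      (- sgn (lpar x && lpar y), [:: y; x]);
      (- dlt x.2 y.1, [:: (x.1, y.2)]);
      (sgn (lpar x && lpar y) * dlt x.1 y.2, [:: (y.1, x.2)])].

(* f lies in the two-sided ideal of the free algebra on the generators of
   gl(m0|m1+n) defining U(gl(m0|m1+n)), i.e. f = 0 in U(gl(m0|m1+n)). *)
Definition inI (m0 m1 n : nat) (f : fls) : Prop :=
  exists gens : seq (K * word * letter * letter * word),
    (forall g, g \in gens ->
       [&& valid_word m0 m1 n g.1.1.1.2, valid_letter m0 m1 n g.1.1.2,
           valid_letter m0 m1 n g.1.2 & valid_word m0 m1 n g.2]) /\
    forall w, coef f w =
      coef (flatten [seq scalef g.1.1.1.1
                       (mulf (wrd g.1.1.1.2) (mulf (superrel g.1.1.2 g.1.2) (wrd g.2)))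
                    | g <- gens]) w.

Definition eqU m0 m1 n (f g : fls) : Prop := inI m0 m1 n (subf f g).

(* membership (of the class of f) in Irr, the left ideal of U(gl(m0|m1+n))
   generated by the irregular monomials *)
Definition inIrr m0 m1 n (f : fls) : Prop :=
  exists gens : seq (K * word * word),
    (forall g, g \in gens ->
       [/\ valid_word m0 m1 n g.1.2, valid_word m0 m1 n g.2 & irregular g.2]) /\
    eqU m0 m1 n f (flatten [seq scalef g.1.1 (wrd (g.1.2 ++ g.2)) | g <- gens]).

(* f represents an element of U(gl(n)) (subalgebra generated by e_ij, i,j in L) *)
Definition proper_fls (n : nat) (f : fls) : bool :=
  all (fun p : K * word =>
         all (fun l : letter => proper_sym n l.1 && proper_sym n l.2) p.2) f.

(* e_{i_1 v_1} ... e_{i_h v_h} e_{v_1 j_1} ... e_{v_h j_h}, v_r = virt r *)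
Definition cap_mono (virt : nat -> sym) (ii js : seq nat) : word :=
  mkseq (fun r => (prp (nth 0%N ii r), virt r.+1)) (size ii) ++
  mkseq (fun r => (virt r.+1, prp (nth 0%N js r))) (size ii).

(* x (an element of U(gl(n))) is the column Capelli bitableau [is|js]
   (star = false: positive virtual symbols alpha_1..alpha_h) or the column
   Capelli *-bitableau [is|js]^* (star = true: negative virtual symbols
   beta_1..beta_h), i.e. x = p(monomial): x in U(gl(n)) and monomial - x in Irr. *)
Definition is_capelli m0 m1 n (star : bool) (ii js : seq nat) (x : fls) : Prop :=
  [/\ size ii = size js,
      all (fun i => 1 <= i <= n)%N ii && all (fun j => 1 <= j <= n)%N js,
      (size ii <= (if star then m1 else m0))%N,
      proper_fls n x &
      inIrr m0 m1 n (subf (wrd (cap_mono (if star then beta else alpha) ii js)) x)].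

Definition in_capelli_span m0 m1 n (star : bool) (u : fls) : Prop :=
  exists comb : seq (K * (seq nat * seq nat * fls)),
    (forall t, t \in comb -> is_capelli m0 m1 n star t.2.1.1 t.2.1.2 t.2.2) /\
    eqU m0 m1 n u (flatten [seq scalef t.1 t.2.2 | t <- comb]).

End FreeAlg.

(* Main.v *)
Require Import Defs.
From HB Require Import structures.
From mathcomp Require Import all_boot all_algebra.
From mathcomp Require Import ring zify.
Set Implicit Arguments. Unset Strict Implicit. Unset Printing Implicit Defensive.
Import GRing.Theory.
Local Open Scope ring_scope.

Ltac slia := repeat match goal with H : _ |- _ => clear H end; lia.
Ltac ifring := repeat (case: ifP => _); ring.

Section S.
Variable K : fieldType.
Variables m0 m1 n : nat.
Implicit Types f g h : fls K.

Lemma fc_cat (f g : fls K) w : coef (f ++ g) w = coef f w + coef g w.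
Proof. by rewrite /coef big_cat. Qed.
Lemma fc_nil w : coef ([::] : fls K) w = 0.
Proof. by rewrite /coef big_nil. Qed.
Lemma fc_cons (p : K * word) f w : coef (p :: f) w = (if p.2 == w then p.1 else 0) + coef f w.
Proof. by rewrite /coef big_cons. Qed.
Lemma fc_scale c (f : fls K) w : coef (scalef c f) w = c * coef f w.
Proof.
elim: f => [|p f IH]; first by rewrite /scalef /= !fc_nil mulr0.
by rewrite /scalef /= !fc_cons -/(scalef c f) IH /=; case: eqP => _; ring.
Qed.
Lemma fc_subf (f g : fls K) w : coef (subf f g) w = coef f w - coef g w.
Proof. by rewrite /subf fc_cat fc_scale mulN1r. Qed.
Lemma fc_wrd v w : coef (wrd K v) w = if v == w then 1 else 0.
Proof. by rewrite /wrd fc_cons fc_nil addr0. Qed.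

Definition ceq (f g : fls K) := forall w, coef f w = coef g w.

Lemma inI_ext f g : ceq f g -> inI m0 m1 n g -> inI m0 m1 n f.
Proof. by move=> e [gens [H1 H2]]; exists gens; split=> // w; rewrite e H2. Qed.

Lemma inI0 f : (forall w, coef f w = 0) -> inI m0 m1 n f.
Proof. by move=> H; exists [::]; split=> // w; rewrite H /= fc_nil. Qed.

Lemma inI_cat f g : inI m0 m1 n f -> inI m0 m1 n g -> inI m0 m1 n (f ++ g).
Proof.
move=> [g1 [H1 E1]] [g2 [H2 E2]]; exists (g1 ++ g2); split.
  by move=> x; rewrite mem_cat => /orP[] ?; [apply: H1|apply: H2].
by move=> w; rewrite fc_cat E1 E2 map_cat flatten_cat fc_cat.
Qed.

Lemma fc_flatten_scale c (l : seq (fls K)) w :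
  coef (flatten [seq scalef c x | x <- l]) w = c * coef (flatten l) w.
Proof.
elim: l => [|x l IH] /=; first by rewrite fc_nil mulr0.
by rewrite !fc_cat IH fc_scale mulrDr.
Qed.

Lemma inI_scale c f : inI m0 m1 n f -> inI m0 m1 n (scalef c f).
Proof.
move=> [g1 [H1 E1]].
exists [seq ((c * x.1.1.1.1, x.1.1.1.2), x.1.1.2, x.1.2, x.2) | x <- g1]; split.
  by move=> x /mapP [y /H1 Hy ->].
move=> w; rewrite fc_scale E1 -fc_flatten_scale; congr (coef (flatten _) w).
rewrite -[in RHS]map_comp -[in LHS]map_comp; apply: eq_map => y /=.
by rewrite /scalef /= !mulrA.
Qed.

Lemma inI_cat_ext f g h : ceq f (g ++ h) -> inI m0 m1 n g -> inI m0 m1 n h -> inI m0 m1 n f.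
Proof. by move=> e a b; apply: inI_ext e _; apply: inI_cat. Qed.

Lemma inIrr_ext f g : ceq f g -> inIrr m0 m1 n g -> inIrr m0 m1 n f.
Proof.
move=> e [gens [H1 H2]]; exists gens; split=> //.
by apply: inI_ext H2 => w; rewrite !fc_subf e.
Qed.

Lemma inIrr_cat f g : inIrr m0 m1 n f -> inIrr m0 m1 n g -> inIrr m0 m1 n (f ++ g).
Proof.
move=> [g1 [H1 E1]] [g2 [H2 E2]]; exists (g1 ++ g2); split.
  by move=> x; rewrite mem_cat => /orP[] ?; [apply: H1|apply: H2].
apply: inI_cat_ext E1 E2 => w.
by rewrite map_cat flatten_cat !(fc_subf, fc_cat); ring.
Qed.

Lemma inIrr_scale c f : inIrr m0 m1 n f -> inIrr m0 m1 n (scalef c f).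
Proof.
move=> [g1 [H1 E1]].
exists [seq ((c * x.1.1, x.1.2), x.2) | x <- g1]; split.
  by move=> x /mapP [y /H1 Hy ->].
apply: inI_ext (inI_scale c E1) => w.
rewrite !(fc_subf, fc_scale) mulrBr -fc_flatten_scale; congr (_ - coef (flatten _) w).
rewrite -[in RHS]map_comp -[in LHS]map_comp; apply: eq_map => y /=.
by rewrite /scalef /= mulrA.
Qed.

Lemma inI_Irr f : inI m0 m1 n f -> inIrr m0 m1 n f.
Proof.
move=> H; exists [::]; split=> //.
by apply: inI_ext H => w; rewrite fc_subf /= fc_nil subr0.
Qed.

Lemma inIrr0 f : (forall w, coef f w = 0) -> inIrr m0 m1 n f.
Proof. by move=> H; apply: inI_Irr; apply: inI0. Qed.

Definition R f g := inIrr m0 m1 n (subf f g).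

Lemma R_ext f f' g g' : ceq f f' -> ceq g g' -> R f' g' -> R f g.
Proof. by move=> e1 e2; apply: inIrr_ext => w; rewrite !fc_subf e1 e2. Qed.
Lemma R_refl f : R f f.
Proof. by apply: inIrr0 => w; rewrite fc_subf subrr. Qed.
Lemma R_trans f g h : R f g -> R g h -> R f h.
Proof.
move=> a b; apply: inIrr_ext (inIrr_cat a b) => w.
by rewrite fc_cat !fc_subf; ring.
Qed.
Lemma R_cat f g f' g' : R f g -> R f' g' -> R (f ++ f') (g ++ g').
Proof.
move=> a b; apply: inIrr_ext (inIrr_cat a b) => w.
by rewrite fc_cat !fc_subf !fc_cat; ring.
Qed.
Lemma R_scale c f g : R f g -> R (scalef c f) (scalef c g).
Proof.
move=> a; apply: inIrr_ext (inIrr_scale c a) => w.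
by rewrite fc_scale !fc_subf !fc_scale; ring.
Qed.
Lemma R_ceq f g : ceq f g -> R f g.
Proof. by move=> e; apply: inIrr0 => w; rewrite fc_subf e subrr. Qed.

End S.


Section S.
Variable K : fieldType.
Variables m0 m1 n : nat.
Implicit Types f g h : fls K.
Local Notation R := (R m0 m1 n).
Local Notation vw := (valid_word m0 m1 n).
Local Notation vl := (valid_letter m0 m1 n).

Lemma superrel_step u x y v : vw u -> vl x -> vl y -> vw v ->
  R (wrd K (u ++ x :: y :: v))
    [:: (sgn K (lpar x && lpar y), u ++ y :: x :: v);
        (dlt K x.2 y.1, u ++ (x.1, y.2) :: v);
        (- (sgn K (lpar x && lpar y) * dlt K x.1 y.2), u ++ (y.1, x.2) :: v)].
Proof.
move=> Hu Hx Hy Hv; apply: inI_Irr; exists [:: (1, u, x, y, v)]; split.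
  by move=> g; rewrite inE => /eqP -> /=; rewrite Hu Hx Hy Hv.
move=> w; congr coef.
rewrite /subf /scalef /=.
congr [:: (_,_); (_,_); (_,_); (_,_)]; ring.
Qed.



Lemma irr_end u l : vw u -> vl l -> virtual l.2 -> R (wrd K (u ++ [:: l])) [::].
Proof.
move=> Hu Hl Hv; exists [:: (1, u, [:: l])]; split.
  move=> g; rewrite inE => /eqP -> /=; split=> //; first by rewrite /valid_word /= Hl.
  exists 0%N, l.2; split=> //; split=> //=.
  by rewrite eqxx.
apply: inI0 => w; rewrite !(fc_subf, fc_cat, fc_scale, fc_wrd, fc_nil) /=; ring.
Qed.

Definition vocc (w : word) := (count (fun l : letter => virtual l.1) w +
  count (fun l : letter => virtual l.2) w)%N.
Definition balanced (w : word) := forall g : sym, virtual g ->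
  count (fun l : letter => l.1 == g) w = count (fun l : letter => l.2 == g) w.
Definition GoodP w := exists r : fls K, proper_fls n r /\
  (forall p, p \in r -> (2 * size p.2 + vocc w <= 2 * size w)%N) /\ R (wrd K w) r.

Fixpoint push_t (u : word) (l : letter) (v : word) : fls K :=
  match v with
  | [::] => [::]
  | y :: v' => (if y.1 == l.2 then [:: (1, u ++ (l.1, y.2) :: v')] else [::]) ++
               scalef (sgn K (lpar l && lpar y)) (push_t (rcons u y) l v')
  end.

Lemma vw_cat a b : vw (a ++ b) = vw a && vw b.
Proof. by rewrite /valid_word all_cat. Qed.
Lemma vw_cons x a : vw (x :: a) = vl x && vw a.
Proof. by []. Qed.

Lemma vocc_cat s1 s2 : vocc (s1 ++ s2) = (vocc s1 + vocc s2)%N.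
Proof. by rewrite /vocc !count_cat; lia. Qed.
Lemma vocc_cons a s : vocc (a :: s) = (virtual a.1 + virtual a.2 + vocc s)%N.
Proof. by rewrite /vocc /=; lia. Qed.

Lemma neq_virt (g : sym) (a : sym) : virtual g -> ~~ virtual a -> (a == g) = false.
Proof. by move=> Hg Ha; apply/eqP => E; rewrite E Hg in Ha. Qed.

Lemma proper_cat (r1 r2 : fls K) : proper_fls n r1 -> proper_fls n r2 -> proper_fls n (r1 ++ r2).
Proof. by rewrite /proper_fls all_cat => -> ->. Qed.
Lemma proper_scale c (r : fls K) : proper_fls n r -> proper_fls n (scalef c r).
Proof. by rewrite /proper_fls /scalef all_map. Qed.
Lemma mem_scale c (r : fls K) p : p \in scalef c r -> exists2 q, q \in r & p.2 = q.2.
Proof. by move=> /mapP [q Hq ->]; exists q. Qed.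

Lemma fc_scale_cat c f g w : coef (scalef c (f ++ g)) w = c * coef f w + c * coef g w.
Proof. by rewrite fc_scale fc_cat mulrDr. Qed.

Lemma push (l : letter) : vl l -> virtual l.2 -> forall v u, vw u -> vw v ->
  all (fun y : letter => ~~ virtual y.2) v -> balanced (u ++ l :: v) ->
  (forall w', (size w' < size (u ++ l :: v))%N -> vw w' -> balanced w' -> GoodP w') ->
  (exists r, proper_fls n r /\ (forall p, p \in r ->
      (2 * size p.2 + 2 + vocc (u ++ l :: v) <= 2 * size (u ++ l :: v))%N) /\
      R (wrd K (u ++ l :: v)) (push_t u l v ++ r)) /\
  (exists r, proper_fls n r /\ (forall p, p \in r ->
      (2 * size p.2 + vocc (u ++ l :: v) <= 2 * size (u ++ l :: v))%N) /\
      R (push_t u l v) r).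
Proof.
move=> Hl Hl2; elim=> [|y v IH] u Hu Hv Hall Hbal Hind.
  split; exists [::]; (split; first by []); split=> //=.
    by apply: irr_end.
  exact: R_refl.
move: Hv Hall => /= /andP [Hy Hv] /andP [Hy2 Hall].
set w := u ++ l :: y :: v.
have Ew1 : rcons u y ++ l :: v = u ++ y :: l :: v by rewrite cat_rcons.
have Hsz1 : size (rcons u y ++ l :: v) = size w by rewrite Ew1 /w !size_cat.
have Hvo1 : vocc (rcons u y ++ l :: v) = vocc w by rewrite Ew1 /w !vocc_cat !vocc_cons; slia.
have Hbal1 : balanced (rcons u y ++ l :: v).
  move=> g Hg; move: (Hbal g Hg); rewrite Ew1 /w !count_cat /=; slia.
have Hu1 : vw (rcons u y) by rewrite -cats1 vw_cat Hu vw_cons Hy.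
have [[r1 [Pr1 [Br1 Rr1]]] [r1' [Pr1' [Br1' Rr1']]]] :=
  IH (rcons u y) Hu1 Hv Hall Hbal1 (fun w' H => Hind w' (leq_trans H (eq_leq Hsz1))).
rewrite Hsz1 Hvo1 in Br1 Br1'.
set s := sgn K (lpar l && lpar y).
have Hst := superrel_step Hu Hl Hy Hv.
rewrite -/s -/w in Hst.
pose t2 := u ++ (y.1, l.2) :: v.
have [r2 [Pr2 [Br2 Rr2]]] : exists r2, proper_fls n r2 /\ (forall p, p \in r2 ->
      (2 * size p.2 + 2 + vocc w <= 2 * size w)%N) /\
      R (scalef (- (s * dlt K l.1 y.2)) (wrd K t2)) (scalef (- (s * dlt K l.1 y.2)) r2).
  case: (eqVneq l.1 y.2) => E; last first.
    exists [::]; split=> //; split=> //; apply: R_ceq => x.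
    by rewrite !fc_scale /dlt (negbTE E) fc_nil; ring.
  have Hvl1 : virtual l.1 = false by apply/negbTE; rewrite E.
  have [|||r2 [Pr2 [Br2 Rr2]]] := Hind t2.
  - by rewrite /t2 /w !size_cat /=; slia.
  - move: Hl Hy; rewrite /t2 vw_cat vw_cons Hu Hv /valid_letter /=.
    by move=> /andP [_ ->] /andP [-> _].
  - move=> g Hg; move: (Hbal g Hg); rewrite /t2 /w !count_cat /= E.
    by rewrite (neq_virt Hg Hy2); slia.
  exists r2; split=> //; split; last exact: R_scale.
  move=> p /Br2; rewrite /t2 /w !size_cat !vocc_cat !vocc_cons /= Hvl1 (negbTE Hy2); slia.
pose t1 := u ++ (l.1, y.2) :: v.
pose T1 := if y.1 == l.2 then [:: (1, t1)] else [::] : fls K.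
have [rt [Prt [Brt Rrt]]] : exists rt, proper_fls n rt /\ (forall p, p \in rt ->
      (2 * size p.2 + vocc w <= 2 * size w)%N) /\ R T1 rt.
  rewrite /T1; case: (eqVneq y.1 l.2) => E; last by exists [::]; split=> //; split=> //; apply: R_refl.
  have [|||r3 [Pr3 [Br3 Rr3]]] := Hind t1.
  - by rewrite /t1 /w !size_cat /=; slia.
  - move: Hl Hy; rewrite /t1 vw_cat vw_cons Hu Hv /valid_letter /=.
    by move=> /andP [-> _] /andP [_ ->].
  - move=> g Hg; move: (Hbal g Hg); rewrite /t1 /w !count_cat /= E; slia.
  exists r3; split=> //; split=> //.
  move=> p /Br3; rewrite /t1 /w !size_cat !vocc_cat !vocc_cons /= E Hl2; slia.
split.
  exists (scalef s r1 ++ scalef (- (s * dlt K l.1 y.2)) r2); split.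
    by apply: proper_cat; apply: proper_scale.
  split.
    move=> p; rewrite mem_cat => /orP [/mem_scale [q Hq ->]|/mem_scale [q Hq ->]]; [exact: Br1|exact: Br2].
  apply: R_trans Hst _.
  apply: (R_trans (g := scalef s (wrd K (rcons u y ++ l :: v)) ++ T1 ++
      scalef (- (s * dlt K l.1 y.2)) (wrd K t2))).
    apply: R_ceq => x; rewrite Ew1 /T1 /t1 /t2 /dlt eq_sym.
    case: (y.1 == l.2); rewrite !fc_cat !fc_scale !fc_wrd !fc_cons ?fc_cat !fc_nil /=; ifring.
  apply: (R_trans (g := scalef s (push_t (rcons u y) l v ++ r1) ++ T1 ++
      scalef (- (s * dlt K l.1 y.2)) r2)).
    by apply: R_cat; [apply: R_scale | apply: R_cat => //; apply: R_refl].
  by apply: R_ceq => x; rewrite /= -/T1 !(fc_cat, fc_scale, fc_scale_cat); ring.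
exists (rt ++ scalef s r1'); split; first by apply: proper_cat => //; apply: proper_scale.
split.
  move=> p; rewrite mem_cat => /orP [|/mem_scale [q Hq ->]]; [exact: Brt|exact: Br1'].
by rewrite /= -/T1; apply: R_cat => //; apply: R_scale.
Qed.

Lemma split_last (P : pred letter) (w : word) : ~~ all P w ->
  exists u l v, w = u ++ l :: v /\ ~~ P l /\ all P v.
Proof.
elim/last_ind: w => [|w x IH] //; rewrite all_rcons.
case Px: (P x) => /= H.
  have [u [l [v [-> [Hl Hv]]]]] := IH H.
  by exists u, l, (rcons v x); rewrite rcons_cat /= all_rcons Px Hv.
by exists w, x, [::]; rewrite cats1 Px.
Qed.

Lemma valid_proper (s : sym) : valid_sym m0 m1 n s -> ~~ virtual s -> proper_sym n s.
Proof. by case: s => [[]|]. Qed.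

Lemma proper_nonvirt (s : sym) : proper_sym n s -> ~~ virtual s.
Proof. by case: s => [[]|]. Qed.

Lemma good_step w : vw w -> balanced w ->
  (forall w', (size w' < size w)%N -> vw w' -> balanced w' -> GoodP w') -> GoodP w.
Proof.
move=> Hw Hb Hind.
case: (boolP (all (fun y : letter => ~~ virtual y.2) w)) => Ha.
  have Hp : all (fun l : letter => proper_sym n l.1 && proper_sym n l.2) w.
    apply/allP => l Hl.
    have Hl2 : ~~ virtual l.2 by apply: (allP Ha).
    have /andP [Hv1 Hv2] : vl l by apply: (allP Hw).
    rewrite (valid_proper Hv2 Hl2) andbT; apply: valid_proper Hv1 _.
    apply/negP => Hv.
    have := Hb _ Hv; rewrite (@eq_in_count _ (fun l0 : letter => l0.2 == l.1) pred0).
      rewrite count_pred0 => /eqP; rewrite -leqn0 leqNgt -has_count.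
      by move/negP; apply; apply/hasP; exists l.
    move=> y Hy /=; apply: neq_virt Hv _; exact: (allP Ha).
  exists (wrd K w); split; first by rewrite /proper_fls /= Hp.
  split; last exact: R_refl.
  move=> p; rewrite inE => /eqP -> /=.
  suff -> : vocc w = 0%N by rewrite addn0.
  rewrite /vocc (eq_in_count (a2 := pred0)) ?count_pred0 ?(eq_in_count (a2 := pred0)) ?count_pred0 //.
    by move=> y Hy /=; apply/negbTE; apply: (allP Ha).
  by move=> y Hy /=; apply/negbTE; have /andP [H1 _] := allP Hp y Hy; apply: proper_nonvirt.
have [u [l [v [Ew [Hl Hv]]]]] := split_last Ha.
rewrite negbK in Hl.
subst w.
move: Hw; rewrite vw_cat vw_cons => /and3P [Hu Hvl Hvv].
have [[r [Pr [Br Rr]]] [r' [Pr' [Br' Rr']]]] := push Hvl Hl Hu Hvv Hv Hb Hind.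
exists (r' ++ r); split; first exact: proper_cat.
split.
  move=> p; rewrite mem_cat => /orP [/Br' //|/Br]; slia.
apply: R_trans Rr _; apply: R_cat Rr' (R_refl _ _ _ _).
Qed.

Lemma good_all N w : (size w <= N)%N -> vw w -> balanced w -> GoodP w.
Proof.
elim: N w => [|N IH] w Hs Hw Hb; apply: good_step => // w' Hw'.
  by move: Hs; rewrite leqn0 => /eqP Hs; rewrite Hs in Hw'.
by apply: IH; rewrite -ltnS; apply: leq_trans Hw' Hs.
Qed.

End S.



Section S.
Variable K : fieldType.
Variables m0 m1 n : nat.
Implicit Types f g h : fls K.
Local Notation R := (R m0 m1 n).
Local Notation vw := (valid_word m0 m1 n).
Local Notation vl := (valid_letter m0 m1 n).
Local Notation push_t := (push_t K).
Local Notation vocc := vocc.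

Lemma scalef1 f : scalef 1 f = f.
Proof. by rewrite /scalef (eq_map (g := id)) ?map_id // => p; rewrite mul1r; case: p. Qed.
Lemma scalef_scalef a b f : scalef a (scalef b f) = scalef (a * b) f.
Proof. by rewrite /scalef -map_comp; apply: eq_map => p /=; rewrite mulrA. Qed.
Lemma sgn_neq0 b : sgn K b != 0.
Proof. by case: b; rewrite /sgn ?oppr_eq0 oner_eq0. Qed.

Lemma push_t_none (l : letter) v u : all (fun y : letter => y.1 != l.2) v -> push_t u l v = [::].
Proof.
elim: v u => [|y v IH] u //= /andP [/negbTE -> Hv].
by rewrite IH.
Qed.

Lemma push_t_skip (l : letter) v1 v2 u : all (fun y : letter => y.1 != l.2) v1 ->
  exists2 c, c != 0 & push_t u l (v1 ++ v2) = scalef c (push_t (u ++ v1) l v2).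
Proof.
elim: v1 u => [|y v1 IH] u /=.
  by move=> _; exists 1; rewrite ?oner_eq0 // cats0 scalef1.
move=> /andP [/negbTE -> Hv]; have [c Hc ->] := IH (rcons u y) Hv.
exists (sgn K (lpar l && lpar y) * c); first by rewrite mulf_neq0 // sgn_neq0.
by rewrite scalef_scalef cat_rcons.
Qed.

Definition pl (l : letter) := proper_sym n l.1 && proper_sym n l.2.

Lemma proper_valid (s : sym) : proper_sym n s -> valid_sym m0 m1 n s.
Proof. by case: s => [[]|]. Qed.

Lemma vocc_proper s : all pl s -> vocc s = 0%N.
Proof.
move=> Hp.
have E1 : {in s, (fun l : letter => virtual l.1) =1 pred0}.
  by move=> y Hy; rewrite -[RHS]/false; apply/negbTE; have /andP [H1 _] : proper_sym n y.1 && proper_sym n y.2 := allP Hp y Hy; exact: proper_nonvirt H1.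
have E2 : {in s, (fun l : letter => virtual l.2) =1 pred0}.
  by move=> y Hy; rewrite -[RHS]/false; apply/negbTE; have /andP [_ H1] : proper_sym n y.1 && proper_sym n y.2 := allP Hp y Hy; exact: proper_nonvirt H1.
by rewrite /vocc (eq_in_count E1) (eq_in_count E2) count_pred0.
Qed.

Lemma proper_prp (s : sym) : proper_sym n s -> s = prp (if s is inr i then i else 0%N).
Proof. by case: s => [[]|]. Qed.

Variable virt : nat -> sym.
Hypothesis Hinj : injective virt.
Hypothesis Hvirt : forall k, virtual (virt k).
Variable w0 : word.
Hypothesis Hw0 : all pl w0.
Hypothesis Hvalid : forall k, (0 < k <= size w0)%N -> valid_sym m0 m1 n (virt k).

Definition ii := [seq (if l.1 is inr i then i else 0%N) | l <- w0].
Definition js := [seq (if l.2 is inr i then i else 0%N) | l <- w0].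
Definition Aw k := mkseq (fun r => (prp (nth 0%N ii r), virt r.+1)) k.
Definition Bw k := mkseq (fun r => (virt r.+1, prp (nth 0%N js r))) k.
Definition Ww k := Aw k ++ Bw k ++ drop k w0.

Lemma nth_w0 r : (r < size w0)%N ->
  nth (prp 0, prp 0) w0 r = (prp (nth 0%N ii r), prp (nth 0%N js r)) /\
  proper_sym n (prp (nth 0%N ii r)) /\ proper_sym n (prp (nth 0%N js r)).
Proof.
move=> Hr; have Hm := mem_nth (prp 0, prp 0) Hr.
have /andP [H1 H2] : proper_sym n (nth (prp 0, prp 0) w0 r).1 && proper_sym n (nth (prp 0, prp 0) w0 r).2 := allP Hw0 _ Hm.
rewrite /ii /js !(nth_map (prp 0, prp 0)) //.
by rewrite -(proper_prp H1) -(proper_prp H2); split=> //; case: (nth _ w0 r).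
Qed.

Lemma count_mk (P : pred letter) F k : count P (mkseq F k) = count (P \o F) (iota 0 k).
Proof. by rewrite /mkseq count_map. Qed.

Lemma vw_W k : (k <= size w0)%N -> vw (Ww k).
Proof.
move=> Hk; rewrite /Ww !vw_cat; apply/and3P; split.
- apply/allP => l /mapP [r]; rewrite mem_iota add0n => /andP [_ Hr] -> /=.
  have [_ [H1 _]] := nth_w0 (leq_trans Hr Hk).
  apply/andP; split; first exact: proper_valid H1.
  by apply: Hvalid; rewrite /= (leq_trans Hr Hk).
- apply/allP => l /mapP [r]; rewrite mem_iota add0n => /andP [_ Hr] -> /=.
  have [_ [_ H1]] := nth_w0 (leq_trans Hr Hk).
  apply/andP; split; last exact: proper_valid H1.
  by apply: Hvalid; rewrite /= (leq_trans Hr Hk).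
- apply/allP => l /mem_drop Hl; have /andP [H1 H2] : proper_sym n l.1 && proper_sym n l.2 := allP Hw0 _ Hl.
  by apply/andP; split; apply: proper_valid.
Qed.

Lemma size_W k : (k <= size w0)%N -> size (Ww k) = (size w0 + k)%N.
Proof. by move=> Hk; rewrite /Ww !size_cat !size_mkseq size_drop (subnKC Hk) addnC. Qed.

Lemma count_mkT (P : pred letter) F k : (forall r, P (F r)) -> count P (mkseq F k) = k.
Proof. by move=> H; rewrite count_mk (eq_count (a2 := predT)) ?count_predT ?size_iota // => r /=; apply: H. Qed.
Lemma count_mk0 (P : pred letter) F k : (forall r, ~~ P (F r)) -> count P (mkseq F k) = 0%N.
Proof. by move=> H; rewrite count_mk (eq_count (a2 := pred0)) ?count_pred0 // => r /=; apply/negbTE/H. Qed.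

Lemma vocc_W k : vocc (Ww k) = (2 * k)%N.
Proof.
have Hd : vocc (drop k w0) = 0%N by apply: vocc_proper; apply/allP => l /mem_drop; apply: (allP Hw0).
have a1 : count (fun l : letter => virtual l.1) (Aw k) = 0%N by apply: count_mk0.
have a2 : count (fun l : letter => virtual l.2) (Aw k) = k by apply: count_mkT => r /=.
have b1 : count (fun l : letter => virtual l.1) (Bw k) = k by apply: count_mkT => r /=.
have b2 : count (fun l : letter => virtual l.2) (Bw k) = 0%N by apply: count_mk0.
rewrite /Ww !vocc_cat Hd /vocc a1 a2 b1 b2; slia.
Qed.

Lemma bal_W k : balanced (Ww k).
Proof.
move=> g Hg; rewrite /Ww !count_cat !count_mk.
rewrite (eq_in_count (s := drop k w0) (a2 := pred0)) ?count_pred0; last first.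
  move=> l /mem_drop Hl /=; have /andP [H1 _] : proper_sym n l.1 && proper_sym n l.2 := allP Hw0 _ Hl; apply: neq_virt Hg _.
  exact: proper_nonvirt H1.
rewrite [in RHS](eq_in_count (s := drop k w0) (a2 := pred0)) ?count_pred0; last first.
  move=> l /mem_drop Hl /=; have /andP [_ H1] : proper_sym n l.1 && proper_sym n l.2 := allP Hw0 _ Hl; apply: neq_virt Hg _.
  exact: proper_nonvirt H1.
rewrite (eq_count (a1 := _ \o _) (a2 := pred0)) ?count_pred0; last first.
  by move=> r /=; apply: neq_virt Hg _.
rewrite [in RHS](eq_count (a1 := _ \o (fun r => (virt r.+1, _))) (a2 := pred0)) ?count_pred0; last first.
  by move=> r /=; apply: neq_virt Hg _.
by rewrite !addn0 add0n.
Qed.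

Definition lk k : letter := (prp (nth 0%N ii k), virt k.+1).
Definition yk k : letter := (virt k.+1, prp (nth 0%N js k)).

Lemma W_step k : Ww k.+1 = Aw k ++ lk k :: (Bw k ++ yk k :: drop k.+1 w0).
Proof. by rewrite /Ww /Aw /Bw !mkseqS !cat_rcons. Qed.

Lemma W_k k : (k < size w0)%N -> Ww k = (Aw k ++ Bw k) ++ ((lk k).1, (yk k).2) :: drop k.+1 w0.
Proof.
move=> Hk; rewrite /Ww catA; congr (_ ++ _).
have [E _] := nth_w0 Hk.
by rewrite (drop_nth (prp 0, prp 0) Hk) E.
Qed.

Lemma B_skip k : all (fun y : letter => y.1 != (lk k).2) (Bw k).
Proof.
apply/allP => y /mapP [r]; rewrite mem_iota add0n => /andP [_ Hr] -> /=.
by rewrite (inj_eq Hinj) eqSS neq_ltn Hr.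
Qed.

Lemma D_skip k : all (fun y : letter => y.1 != (lk k).2) (drop k.+1 w0).
Proof.
apply/allP => y /mem_drop Hy.
have /andP [H1 _] : proper_sym n y.1 && proper_sym n y.2 := allP Hw0 _ Hy.
by rewrite /lk /= (neq_virt (Hvirt k.+1) (proper_nonvirt H1)).
Qed.

Lemma cap_ind k : (k <= size w0)%N -> exists2 c : K, c != 0 & exists r : fls K,
  [/\ proper_fls n r, (forall p, p \in r -> (size p.2 < size w0)%N) &
      R (wrd K (Ww k)) (scalef c (wrd K w0) ++ r)].
Proof.
elim: k => [|k IH] Hk.
  exists 1; first exact: oner_neq0.
  exists [::]; split=> //; apply: R_ceq => x.
  by rewrite /Ww /= drop0 mul1r.
have [c Hc [r0 [Pr0 Br0 Rr0]]] := IH (ltnW Hk).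
have HW := vw_W Hk; have HB := bal_W k.+1.
rewrite W_step in HW HB.
move: HW; rewrite vw_cat vw_cons => /and3P [Hu Hl Hv].
have Hall : all (fun y : letter => ~~ virtual y.2) (Bw k ++ yk k :: drop k.+1 w0).
  rewrite all_cat /=; apply/andP; split; first by apply/allP => y /mapP [r _ ->].
  apply/allP => y /mem_drop Hy.
  have /andP [_ H2] : proper_sym n y.1 && proper_sym n y.2 := allP Hw0 _ Hy.
  exact: proper_nonvirt H2.
have [[r [Pr [Br Rr]]] _] := push Hl (Hvirt _) Hu Hv Hall HB
  (fun w' _ Hv' Hb' => @good_all K m0 m1 n _ w' (leqnn _) Hv' Hb').
rewrite -W_step size_W // vocc_W in Br Rr.
have [c' Hc' Ep] := @push_t_skip _ (Bw k) (yk k :: drop k.+1 w0) (Aw k) (B_skip k).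
rewrite Ep /= eqxx push_t_none ?D_skip // in Rr.
exists (c' * c); first by rewrite mulf_neq0.
exists (scalef c' r0 ++ r); split.
- by apply: proper_cat => //; apply: proper_scale.
- move=> p; rewrite mem_cat => /orP [/mem_scale [q Hq ->]|/Br]; first exact: Br0.
  by move=> H; move: H; slia.
apply: R_trans Rr _.
apply: (R_trans (g := scalef c' (scalef c (wrd K w0) ++ r0) ++ r)).
  apply: R_cat; last exact: R_refl.
  apply: R_trans (R_scale c' Rr0); apply: R_ceq => x.
  by rewrite (W_k Hk) !(fc_scale, fc_cat, fc_wrd, fc_nil) /=; ifring.
by apply: R_ceq => x; rewrite !(fc_scale, fc_cat, fc_wrd, fc_nil); ring.
Qed.

End S.



Section S.
Variable K : fieldType.
Variables m0 m1 n : nat.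
Variable star : bool.
Implicit Types f g h : fls K.
Local Notation R := (R m0 m1 n).
Local Notation Span := (in_capelli_span m0 m1 n star).

Lemma span_ceq f g : ceq f g -> Span g -> Span f.
Proof.
move=> e [comb [H1 H2]]; exists comb; split=> //.
by apply: inI_ext H2 => w; rewrite !fc_subf e.
Qed.

Lemma span_nil : Span ([::] : fls K).
Proof. by exists [::]; split=> //; apply: inI0 => w; rewrite fc_subf /= fc_nil subrr. Qed.

Lemma span_cat f g : Span f -> Span g -> Span (f ++ g).
Proof.
move=> [c1 [H1 E1]] [c2 [H2 E2]]; exists (c1 ++ c2); split.
  by move=> x; rewrite mem_cat => /orP[] ?; [apply: H1|apply: H2].
apply: inI_ext (inI_cat E1 E2) => w.
by rewrite map_cat flatten_cat !(fc_subf, fc_cat); ring.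
Qed.

Lemma span_scale c f : Span f -> Span (scalef c f).
Proof.
move=> [c1 [H1 E1]]; exists [seq (c * t.1, t.2) | t <- c1]; split.
  by move=> x /mapP [y /H1 Hy ->].
apply: inI_ext (inI_scale c E1) => w.
rewrite !(fc_subf, fc_scale) mulrBr -fc_flatten_scale; congr (_ - coef (flatten _) w).
rewrite -[in RHS]map_comp -[in LHS]map_comp; apply: eq_map => y /=.
by rewrite scalef_scalef.
Qed.

Lemma span_cap ii js (x : fls K) : is_capelli m0 m1 n star ii js x -> Span x.
Proof.
move=> H; exists [:: (1, (ii, js, x))]; split; first by move=> t; rewrite inE => /eqP ->.
by apply: inI0 => w; rewrite /= fc_subf fc_cat fc_nil fc_scale; ring.
Qed.

Lemma span_fls f : (forall p, p \in f -> Span (wrd K p.2)) -> Span f.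
Proof.
elim: f => [|p f IH] H; first exact: span_nil.
apply: (span_ceq (g := scalef p.1 (wrd K p.2) ++ f)).
  by move=> w; rewrite fc_cons !fc_cat fc_scale fc_wrd; case: ifP => _; ring.
apply: span_cat; first by apply: span_scale; apply: H; rewrite inE eqxx.
by apply: IH => q Hq; apply: H; rewrite inE Hq orbT.
Qed.

Definition vrt k := if star then beta k else alpha k.
Definition mm := if star then m1 else m0.

Lemma span_word_step w0 : all (pl n) w0 -> (size w0 <= mm)%N ->
  (forall w', (size w' < size w0)%N -> all (pl n) w' -> Span (wrd K w')) ->
  Span (wrd K w0).
Proof.
move=> Hw0 Hm Hind.
have Hinj : injective vrt by rewrite /vrt; case: star => a b [].
have Hvirt : forall k, virtual (vrt k) by rewrite /vrt; case: star.
have Hvalid : forall k, (0 < k <= size w0)%N -> valid_sym m0 m1 n (vrt k).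
  move=> k /andP [H1 H2]; move: Hm; rewrite /vrt /mm; case: star => Hm /=;
  by rewrite H1 (leq_trans H2 Hm).
have [c Hc [r [Pr Br Rr]]] := @cap_ind K m0 m1 n vrt Hinj Hvirt w0 Hw0 Hvalid _ (leqnn _).
set x := scalef c (wrd K w0) ++ r.
have Hx : Span x.
  apply: (span_cap (ii := ii w0) (js := js w0)); split.
  - by rewrite /ii /js !size_map.
  - rewrite /ii /js !all_map; apply/andP; split; apply/allP => l Hl /=;
    have /andP [H1 H2] : proper_sym n l.1 && proper_sym n l.2 := allP Hw0 _ Hl.
      by move: H1; case: l.1 => [[]|].
    by move: H2; case: l.2 => [[]|].
  - by move: Hm; rewrite /ii size_map /mm.
  - apply: proper_cat => //; apply: proper_scale.
    by rewrite /proper_fls /= andbT.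
  - move: Rr; rewrite /Ww drop_size cats0 /cap_mono (_ : size (ii w0) = size w0) ?size_map //.
    by rewrite /Aw /Bw /vrt; case: star => H; exact: H.
have Hr : Span r by apply: span_fls => p Hp; apply: Hind; [exact: Br | exact: (allP Pr)].
apply: (span_ceq (g := scalef c^-1 (x ++ scalef (-1) r))); last first.
  by apply: span_scale; apply: span_cat => //; apply: span_scale.
by move=> w; rewrite !(fc_cat, fc_scale); field.
Qed.

Lemma span_word N w0 : (N <= mm)%N -> (size w0 <= N)%N -> all (pl n) w0 -> Span (wrd K w0).
Proof.
elim: N w0 => [|N IH] w0 HN Hs Hw0; apply: span_word_step => //.
- by apply: leq_trans Hs HN.
- by move=> w'; move: Hs; rewrite leqn0 => /eqP ->.
- by apply: leq_trans Hs HN.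
move=> w' Hw' Hp; apply: IH => //; first exact: ltnW.
by rewrite -ltnS; apply: leq_trans Hw' Hs.
Qed.

End S.


Lemma size_le_max (K : fieldType) (u : fls K) p : p \in u ->
  (size p.2 <= foldr maxn 0 [seq size q.2 | q <- u])%N.
Proof.
elim: u => [|q u IH] //=; rewrite inE => /orP [/eqP ->|/IH H].
  by rewrite leq_maxl.
by rewrite (leq_trans H) // leq_maxr.
Qed.

Theorem mainTheorem6 (K : fieldType) (hK : [pchar K] =i pred0) (n : nat)
  (u : fls K) :
  proper_fls n u ->
  exists M : nat, forall m0 m1 : nat, (M <= m0)%N -> (M <= m1)%N ->
    in_capelli_span m0 m1 n false u /\ in_capelli_span m0 m1 n true u.
Proof.
move=> Hu; exists (foldr maxn 0 [seq size q.2 | q <- u]) => m0 m1 H0 H1.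
split; apply: span_fls => p Hp; apply: (@span_word K _ _ _ _ (size p.2)) => //;
  try exact: (allP Hu); rewrite /mm /=.
- by apply: leq_trans H0; apply: size_le_max.
- by apply: leq_trans H1; apply: size_le_max.
Qed.
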